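(* Consider the RCP model without queue feedback with parameters $C,a,\tau_1,\tau_2>0$, $\gamma\in(0,1]$, and bifurcation parameter $\kappa>0$, and let $\kappa_c=\dfrac{\pi}{2a\cos\!\left(\frac{\pi(\tau_1-\tau_2)}{2(\tau_1+\tau_2)}\right)}$ be the value at which its equilibrium $R^*=\gamma C/2$ loses local stability through a Hopf bifurcation. Let $c_1(0)$ denote the first Lyapunov coefficient of the Hopf normal form at $\kappa=\kappa_c$ (Hassard–Kazarinoff–Wan normalization, $\dot z=i\omega_0 z+c_1(0)z|z|^2+\cdots$ on the center manifold), and $\vartheta=\pi\tau_1/(\tau_1+\tau_2)\in(0,\pi)$. Then $$\operatorname{sign}\big(\operatorname{Re}c_1(0)\big)=\operatorname{sign}\!\left(\frac{2\pi\,\tilde f(\vartheta)}{(\gamma C)^2(\tau_1+\tau_2)}\right)=\operatorname{sign}\tilde f(\vartheta)<0,$$ with $\tilde f$ as in the context. Consequently $\mu_2=-\operatorname{Re}c_1(0)/\alpha'(0)>0$ and $\beta_2=2\operatorname{Re}c_1(0)<0$, where $\alpha'(0)=\operatorname{Re}(d\lambda/d\kappa)|_{\kappa=\kappa_c}>0$: for all parameter values, the Hopf bifurcation is super-critical and the bifurcating periodic solutions are asymptotically orbitally stable.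
   Context: RCP model without queue feedback: $$\frac{d}{dt}R(t)=\kappa\,\frac{2aR(t)}{\gamma C(\tau_1+\tau_2)}\big(\gamma C-y(t)\big),\quad y(t)=R(t-\tau_1)+R(t-\tau_2).$$ $\omega_0=\pi/(\tau_1+\tau_2)$ is the crossing frequency, and $\lambda(\kappa)$ is the root of the characteristic equation $\lambda+\kappa\frac{a}{\tau_1+\tau_2}(e^{-\lambda\tau_1}+e^{-\lambda\tau_2})=0$ with $\lambda(\kappa_c)=i\omega_0$. $$\tilde f(\vartheta)=-2\pi\sin^4\vartheta-\pi\sin^2\vartheta\cos^2(2\vartheta)-2\cos(2\vartheta)\sin^3\vartheta-\cos(2\vartheta)\sin^2\vartheta\cos\vartheta\,(\pi-2\vartheta).$$ Super-critical means $\mu_2>0$ (periodic orbits exist for $\kappa>\kappa_c$); asymptotic orbital stability of the orbits corresponds to Floquet exponent $\beta_2<0$. *)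

(* Defs.v *)
From Stdlib Require Import Reals Lra.
Open Scope R_scope.

Record Cx := mkC { Re : R ; Im : R }.
Definition Cr (x : R) : Cx := mkC x 0.
Definition Ci : Cx := mkC 0 1.
Definition Cadd (z w : Cx) : Cx := mkC (Re z + Re w) (Im z + Im w).
Definition Cneg (z : Cx) : Cx := mkC (- Re z) (- Im z).
Definition Csub (z w : Cx) : Cx := Cadd z (Cneg w).
Definition Cmul (z w : Cx) : Cx :=
  mkC (Re z * Re w - Im z * Im w) (Re z * Im w + Im z * Re w).
Definition Cconj (z : Cx) : Cx := mkC (Re z) (- Im z).
Definition Cnorm2 (z : Cx) : R := Re z * Re z + Im z * Im z.
Definition Cinv (z : Cx) : Cx := mkC (Re z / Cnorm2 z) (- Im z / Cnorm2 z).
Definition Cdiv (z w : Cx) : Cx := Cmul z (Cinv w).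
Definition Cscale (r : R) (z : Cx) : Cx := mkC (r * Re z) (r * Im z).
Definition Cexp (z : Cx) : Cx := mkC (exp (Re z) * cos (Im z)) (exp (Re z) * sin (Im z)).

(** * RCP model without queue feedback
    dR/dt = kappa * 2 a R(t) / (gamma C (tau1+tau2)) * (gamma C - R(t-tau1) - R(t-tau2)).
    Equilibrium R* = gamma C / 2.  Writing R = R* + u one gets
      u'(t) = L u_t + F(u_t),
      L phi = - kappa a/(tau1+tau2) (phi(-tau1) + phi(-tau2)),
      F phi = - k phi(0) (phi(-tau1) + phi(-tau2)),   k = 2 kappa a /(gamma C (tau1+tau2)),
    (F is exactly quadratic: there are no higher order terms). *)

Definition Tsum (tau1 tau2 : R) : R := tau1 + tau2.

Definition char_fun (a tau1 tau2 kappa : R) (lam : Cx) : Cx :=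
  Cadd lam (Cscale (kappa * a / Tsum tau1 tau2)
                   (Cadd (Cexp (Cscale (- tau1) lam)) (Cexp (Cscale (- tau2) lam)))).

Definition char_fun_deriv (a tau1 tau2 kappa : R) (lam : Cx) : Cx :=
  Csub (Cr 1) (Cscale (kappa * a / Tsum tau1 tau2)
                 (Cadd (Cscale tau1 (Cexp (Cscale (- tau1) lam)))
                       (Cscale tau2 (Cexp (Cscale (- tau2) lam))))).

Definition omega0 (tau1 tau2 : R) : R := PI / (tau1 + tau2).
Definition kappa_c (a tau1 tau2 : R) : R :=
  PI / (2 * a * cos (PI * (tau1 - tau2) / (2 * (tau1 + tau2)))).
Definition theta_of (tau1 tau2 : R) : R := PI * tau1 / (tau1 + tau2).

Definition ftilde (t : R) : R :=
  - 2 * PI * sin t ^ 4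
  - PI * sin t ^ 2 * cos (2 * t) ^ 2
  - 2 * cos (2 * t) * sin t ^ 3
  - cos (2 * t) * sin t ^ 2 * cos t * (PI - 2 * t).

(** On the center manifold  u_t(theta) = z e^{i w theta} + conj(z) e^{-i w theta} + W(z, conj z, theta),
    W = w20 z^2/2 + w11 z conj(z) + w02 conj(z)^2/2 + ..., the reduced equation is
    z' = i w z + g(z, conj z),  g = F(u_t) / Delta'(i w),   g = sum g_ij z^i conj(z)^j/(i! j!),
    and  c_1(0) = i/(2w) (g20 g11 - 2|g11|^2 - |g02|^2/3) + g21/2. *)
Section HKW.
Variables (C a tau1 tau2 gamma : R).

Let T := Tsum tau1 tau2.
Let w := omega0 tau1 tau2.
Let kc := kappa_c a tau1 tau2.
Let iw : Cx := mkC 0 w.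
Let k : R := 2 * kc * a / (gamma * C * T).
Let E1 : Cx := Cexp (Cscale (- tau1) iw).
Let E2 : Cx := Cexp (Cscale (- tau2) iw).
Let S : Cx := Cadd E1 E2.
Let D : Cx := char_fun_deriv a tau1 tau2 kc iw.

(** coefficients of z^2/2, z conj z, conj z^2/2 in F(z q + conj z conj q) *)
Let F20 : Cx := Cscale (- 2 * k) S.
Let F11 : Cx := Cscale (- k) (Cadd S (Cconj S)).
Let F02 : Cx := Cscale (- 2 * k) (Cconj S).

Definition hkw_g20 : Cx := Cdiv F20 D.
Definition hkw_g11 : Cx := Cdiv F11 D.
Definition hkw_g02 : Cx := Cdiv F02 D.

Definition hkw_w20 (th : R) : Cx :=
  Cadd (Cadd (Cmul (Cmul Ci (Cscale (/ w) hkw_g20)) (Cexp (mkC 0 (w * th))))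
             (Cmul (Cmul Ci (Cscale (/ (3 * w)) (Cconj hkw_g02))) (Cexp (mkC 0 (- w * th)))))
       (Cmul (Cdiv F20 (char_fun a tau1 tau2 kc (mkC 0 (2 * w)))) (Cexp (mkC 0 (2 * w * th)))).

Definition hkw_w11 (th : R) : Cx :=
  Cadd (Cadd (Cneg (Cmul (Cmul Ci (Cscale (/ w) hkw_g11)) (Cexp (mkC 0 (w * th)))))
             (Cmul (Cmul Ci (Cscale (/ w) (Cconj hkw_g11))) (Cexp (mkC 0 (- w * th)))))
       (Cdiv F11 (char_fun a tau1 tau2 kc (Cr 0))).

(** coefficient of z^2 conj z in F(u_t) on the center manifold *)
Let F21 : Cx :=
  Cscale (- k)
   (Cadd (Cadd (Cadd (hkw_w11 (- tau1)) (hkw_w11 (- tau2)))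
               (Cscale (/ 2) (Cadd (hkw_w20 (- tau1)) (hkw_w20 (- tau2)))))
         (Cadd (Cmul (hkw_w11 0) S) (Cscale (/ 2) (Cmul (hkw_w20 0) (Cconj S))))).

Definition hkw_g21 : Cx := Cdiv (Cscale 2 F21) D.

Definition lyap_c1 : Cx :=
  Cadd (Cmul (Cmul Ci (Cr (/ (2 * w))))
             (Csub (Cmul hkw_g20 hkw_g11)
                   (Cr (2 * Cnorm2 hkw_g11 + Cnorm2 hkw_g02 / 3))))
       (Cscale (/ 2) hkw_g21).
End HKW.

Definition sgn (x : R) : R := if Rlt_dec 0 x then 1 else if Rlt_dec x 0 then -1 else 0.

(* Main.v *)
Require Import Defs.
From Stdlib Require Import Reals Lra.
Open Scope R_scope.

Lemma Cexp_sc t x : Cexp (Cscale t (mkC 0 x)) = mkC (cos (t*x)) (sin (t*x)).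
Proof. unfold Cexp, Cscale; simpl. rewrite Rmult_0_r, exp_0. f_equal; ring. Qed.
Lemma Cexp_im x : Cexp (mkC 0 x) = mkC (cos x) (sin x).
Proof. unfold Cexp; simpl. rewrite exp_0. f_equal; ring. Qed.


Definition CZ := mkC 0 0.
Lemma Z1 r : Cscale r CZ = CZ. Proof. unfold Cscale, CZ; f_equal; simpl; ring. Qed.
Lemma Z2 z : Cmul CZ z = CZ. Proof. unfold Cmul, CZ; f_equal; simpl; ring. Qed.
Lemma Z3 z : Cmul z CZ = CZ. Proof. unfold Cmul, CZ; f_equal; simpl; ring. Qed.
Lemma Z4 z : Cdiv CZ z = CZ. Proof. unfold Cdiv; apply Z2. Qed.
Lemma Z5 : Cconj CZ = CZ. Proof. unfold Cconj, CZ; f_equal; simpl; ring. Qed.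
Lemma Z6 : Cneg CZ = CZ. Proof. unfold Cneg, CZ; f_equal; simpl; ring. Qed.
Lemma Z7 z : Cadd CZ z = z. Proof. destruct z; unfold Cadd, CZ; simpl; f_equal; ring. Qed.
Lemma Z8 z : Cadd z CZ = z. Proof. destruct z; unfold Cadd, CZ; simpl; f_equal; ring. Qed.
Lemma Z9 : Cnorm2 CZ = 0. Proof. unfold Cnorm2, CZ; simpl; ring. Qed.
Lemma Z0 y : Cadd (mkC 0 y) (Cconj (mkC 0 y)) = CZ. Proof. unfold Cadd, Cconj, CZ; simpl; f_equal; ring. Qed.

Lemma Re_c1_formula (C a tau1 tau2 gamma : R)
  (hC : 0 < C) (ha : 0 < a) (ht1 : 0 < tau1) (ht2 : 0 < tau2) (hg : 0 < gamma) :
  let th := theta_of tau1 tau2 in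
  let s := sin th in let c := cos th in let C2 := cos (2*th) in
  let d := 1 + (PI - 2*th)*c/(2*s) in
  Re (lyap_c1 C a tau1 tau2 gamma) =
   2*PI*ftilde th / ((gamma*C)^2*(tau1+tau2) * (s^2 * (C2^2+4*s^2) * (d^2 + PI^2/4))).
Proof.
  intros th s c C2 d.
  assert (hT : 0 < tau1 + tau2) by lra.
  assert (hth0 : 0 < th) by (unfold th, theta_of; apply Rdiv_lt_0_compat; [apply Rmult_lt_0_compat; [apply PI_RGT_0|lra]|lra]).
  assert (hthpi : th < PI).
  { unfold th, theta_of. apply Rmult_lt_reg_r with (tau1+tau2); [lra|].
    unfold Rdiv; rewrite Rmult_assoc, Rinv_l by lra. pose proof PI_RGT_0. nra. }
  assert (hs : 0 < s) by (apply sin_gt_0; lra).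
  assert (hw1 : omega0 tau1 tau2 * tau1 = th) by (unfold omega0, th, theta_of; field; lra).
  assert (hw2 : omega0 tau1 tau2 * tau2 = PI - th) by (unfold omega0, th, theta_of; field; lra).
  assert (hkc : kappa_c a tau1 tau2 = PI / (2*a*s)).
  { unfold kappa_c. replace (PI * (tau1 - tau2) / (2 * (tau1 + tau2))) with (-(PI/2 - th)).
    rewrite cos_neg, cos_shift. reflexivity. unfold th, theta_of. field. lra. }
  set (w := omega0 tau1 tau2) in *.
  set (S2 := sin (2*th)).
  assert (cA1 : cos (- tau1 * w) = c) by (replace (- tau1 * w) with (-th) by (unfold w, th, theta_of, omega0; field; lra); rewrite cos_neg; reflexivity).
  assert (sA1 : sin (- tau1 * w) = - s) by (replace (- tau1 * w) with (-th) by (unfold w, th, theta_of, omega0; field; lra); rewrite sin_neg; reflexivity).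
  assert (cA2 : cos (- tau2 * w) = - c) by (replace (- tau2 * w) with (-(PI-th)) by (unfold w, th, theta_of, omega0; field; lra); rewrite cos_neg, Rtrigo_facts.cos_pi_minus; reflexivity).
  assert (sA2 : sin (- tau2 * w) = - s) by (replace (- tau2 * w) with (-(PI-th)) by (unfold w, th, theta_of, omega0; field; lra); rewrite sin_neg, sin_PI_x; reflexivity).
  assert (cB1 : cos (w * - tau1) = c) by (rewrite <- cA1; f_equal; ring).
  assert (sB1 : sin (w * - tau1) = - s) by (rewrite <- sA1; f_equal; ring).
  assert (cB2 : cos (w * - tau2) = - c) by (rewrite <- cA2; f_equal; ring).
  assert (sB2 : sin (w * - tau2) = - s) by (rewrite <- sA2; f_equal; ring).
  assert (cC1 : cos (- w * - tau1) = c) by (replace (- w * - tau1) with th by (unfold w, th, theta_of, omega0; field; lra); reflexivity).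
  assert (sC1 : sin (- w * - tau1) = s) by (replace (- w * - tau1) with th by (unfold w, th, theta_of, omega0; field; lra); reflexivity).
  assert (cC2 : cos (- w * - tau2) = - c) by (replace (- w * - tau2) with (PI-th) by (unfold w, th, theta_of, omega0; field; lra); apply Rtrigo_facts.cos_pi_minus).
  assert (sC2 : sin (- w * - tau2) = s) by (replace (- w * - tau2) with (PI-th) by (unfold w, th, theta_of, omega0; field; lra); apply sin_PI_x).
  assert (cD1 : cos (2 * w * - tau1) = C2) by (replace (2 * w * - tau1) with (-(2*th)) by (unfold w, th, theta_of, omega0; field; lra); rewrite cos_neg; reflexivity).
  assert (sD1 : sin (2 * w * - tau1) = - S2) by (replace (2 * w * - tau1) with (-(2*th)) by (unfold w, th, theta_of, omega0; field; lra); rewrite sin_neg; reflexivity).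
  assert (cD2 : cos (2 * w * - tau2) = C2) by (replace (2 * w * - tau2) with (2*th - 2*PI) by (unfold w, th, theta_of, omega0; field; lra); rewrite cos_minus, cos_2PI, sin_2PI; unfold C2; ring).
  assert (sD2 : sin (2 * w * - tau2) = S2) by (replace (2 * w * - tau2) with (2*th - 2*PI) by (unfold w, th, theta_of, omega0; field; lra); rewrite sin_minus, cos_2PI, sin_2PI; unfold S2; ring).
  assert (cE1 : cos (- tau1 * (2 * w)) = C2) by (rewrite <- cD1; f_equal; ring).
  assert (sE1 : sin (- tau1 * (2 * w)) = - S2) by (rewrite <- sD1; f_equal; ring).
  assert (cE2 : cos (- tau2 * (2 * w)) = C2) by (rewrite <- cD2; f_equal; ring).
  assert (sE2 : sin (- tau2 * (2 * w)) = S2) by (rewrite <- sD2; f_equal; ring).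
  unfold lyap_c1, hkw_g21, hkw_w20, hkw_w11, hkw_g20, hkw_g11, hkw_g02, char_fun, char_fun_deriv, Cr.
  cbv zeta. fold w.
  rewrite !Cexp_sc, !Cexp_im.
  rewrite cA1, sA1, cA2, sA2, cB1, sB1, cB2, sB2, cC1, sC1, cC2, sC2, cD1, sD1, cD2, sD2, cE1, sE1, cE2, sE2.
  rewrite !Rmult_0_r, !cos_0, !sin_0, hkc.

  assert (HS : Cadd (mkC c (- s)) (mkC (- c) (- s)) = mkC 0 (-2*s)) by (unfold Cadd; simpl; f_equal; ring).
  rewrite HS, Z0.
  repeat (rewrite ?Z1, ?Z2, ?Z3, ?Z4, ?Z5, ?Z6, ?Z7, ?Z8, ?Z9).
  assert (HD : Csub (mkC 1 0) (Cscale (PI / (2 * a * s) * a / Tsum tau1 tau2)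
        (Cadd (Cscale tau1 (mkC c (- s))) (Cscale tau2 (mkC (- c) (- s))))) = mkC d (PI/2)).
  { unfold Csub, Cadd, Cneg, Cscale; simpl. unfold d, th, theta_of, Tsum. f_equal; field; split; lra. }
  rewrite HD.
  set (k := 2 * (PI / (2 * a * s)) * a / (gamma * C * Tsum tau1 tau2)).
  set (K := PI / (2 * a * s) * a / Tsum tau1 tau2).
  remember (Cdiv (Cscale (-2 * k) (mkC 0 (-2*s))) (mkC d (PI/2))) as g20 eqn:Hg20.
  remember (Cdiv (Cscale (-2 * k) (Cconj (mkC 0 (-2*s)))) (mkC d (PI/2))) as g02 eqn:Hg02.
  remember (Cdiv (Cscale (-2 * k) (mkC 0 (-2*s))) (Cadd (mkC 0 (2*w)) (Cscale K (Cadd (mkC C2 (- S2)) (mkC C2 S2))))) as q eqn:Hq.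
  destruct g20 as [x1 y1]; destruct g02 as [x2 y2]; destruct q as [x3 y3].
  unfold Cadd, Csub, Cneg, Cmul, Cdiv, Cinv, Cnorm2, Cconj, Cscale, Ci, CZ in Hg20, Hg02, Hq |- *; cbn [Re Im] in Hg20, Hg02, Hq |- *.
  injection Hg20 as Hx1 Hy1. injection Hg02 as Hx2 Hy2. injection Hq as Hx3 Hy3.
  assert (Hf : ftilde th = - s^2 * (PI*(C2^2 + 2*s^2) + 2*s*C2*d)).
  { unfold ftilde. fold c s C2. unfold d. field. lra. }
  rewrite Hf.
  unfold Cadd, Csub, Cneg, Cmul, Cdiv, Cinv, Cnorm2, Cconj, Cscale, Ci, CZ; cbn [Re Im].
  subst x1 y1 x2 y2 x3 y3.
  assert (hw : w = PI / (tau1+tau2)) by reflexivity.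
  assert (hd : 0 < d^2 + PI^2/4) by (pose proof PI_RGT_0; nra).
  assert (hC2 : 0 < C2^2 + 4*s^2) by nra.
  unfold k, K. clearbody w d c s C2 S2 th. subst w. unfold Tsum.
  pose proof PI_RGT_0 as hP.
  assert (hPs : 0 < PI * s) by nra.
  field. repeat split; try lra; try nra.
  all: replace (- S2 + S2) with 0 by ring; apply Rgt_not_eq; nra.
Qed.

Lemma ftilde_neg th : 0 < th < PI -> ftilde th < 0.
Proof.
  intros [h0 h1].
  pose proof PI2_3_2 as hP3.
  assert (hs : 0 < sin th) by (apply sin_gt_0; lra).
  assert (hsc := sin2_cos2 th). unfold Rsqr in hsc.
  assert (hC2 : cos (2*th) = 1 - 2 * sin th * sin th) by (rewrite cos_2a_sin; ring).
  set (s := sin th) in *. set (c := cos th) in *. set (P := c * (PI - 2*th)).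
  assert (hP : 0 <= P /\ P <= PI * Rabs c).
  { unfold P. destruct (Rle_dec th (PI/2)).
    - assert (0 <= c) by (apply cos_ge_0; lra). rewrite Rabs_right by lra. split; nra.
    - assert (c <= 0) by (apply cos_le_0; lra). rewrite Rabs_left1 by lra. split; nra. }
  assert (Hf : ftilde th = - s^2 * (PI*(cos (2*th)^2 + 2*s^2) + 2*s*cos (2*th) + cos (2*th) * P)).
  { unfold ftilde, P. fold s c. ring. }
  rewrite Hf. rewrite hC2. set (C2 := 1 - 2*s*s).
  assert (hs2 : 0 < s^2) by nra.
  assert (0 < PI*(C2^2 + 2*s^2) + 2*s*C2 + C2*P); [|nra].
  destruct (Rle_dec 0 C2).
  - destruct hP. assert (0 <= C2 * P) by nra. assert (0 <= 2*s*C2) by nra. nra.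
  - destruct hP as [hP1 hP2].
    assert (hc : Rabs c <= 3/4).
    { assert (c*c < 1/2) by (unfold C2 in *; nra).
      destruct (Rcase_abs c); [rewrite Rabs_left by lra|rewrite Rabs_right by lra]; nra. }
    assert (hPb : P <= 3/4 * PI) by nra.
    assert (hs1 : s <= 1) by nra.
    assert (hC2b : - C2 <= s^2) by (unfold C2; nra).
    assert (hq : - C2 * (2*s + P) <= s^2 * (2 + 3/4*PI)).
    { apply Rmult_le_compat; nra. }
    nra.
Qed.
Lemma dl_ext f g x l : (forall y, f y = g y) -> derivable_pt_lim f x l -> derivable_pt_lim g x l.
Proof. intros E H eps he. destruct (H eps he) as [dl Hd]. exists dl. intros h hh hl. rewrite <- !E. auto. Qed.

Lemma dl_zero f x l d0 : 0 < d0 -> (forall k, Rabs (k - x) < d0 -> f k = 0) ->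
  derivable_pt_lim f x l -> l = 0.
Proof.
  intros hd0 hz H. destruct (Req_dec l 0) as [|hl]; [assumption|exfalso].
  destruct (H (Rabs l)) as [dl Hd]. { apply Rabs_pos_lt; auto. }
  set (h := Rmin dl d0 / 2).
  assert (hdl := cond_pos dl).
  assert (hm : 0 < Rmin dl d0) by (apply Rmin_pos; lra).
  assert (hh : 0 < h) by (unfold h; lra).
  assert (h1 : h < dl) by (unfold h; pose proof (Rmin_l dl d0); lra).
  assert (h2 : h < d0) by (unfold h; pose proof (Rmin_r dl d0); lra).
  specialize (Hd h ltac:(lra) ltac:(rewrite Rabs_right; lra)).
  rewrite (hz (x+h)) in Hd by (replace (x+h-x) with h by ring; rewrite Rabs_right; lra).
  rewrite (hz x) in Hd by (replace (x-x) with 0 by ring; rewrite Rabs_R0; lra).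
  replace ((0 - 0) / h - l) with (- l) in Hd by (field; lra).
  rewrite Rabs_Ropp in Hd. lra.
Qed.

Lemma dl_ec (t : R) (f g : R -> R) x df dg (trig dtrig : R -> R) :
  (forall y, derivable_pt_lim trig y (dtrig y)) ->
  derivable_pt_lim f x df -> derivable_pt_lim g x dg ->
  derivable_pt_lim (fun k => exp (-t * f k) * trig (-t * g k)) x
    (exp (-t * f x) * (-t * df) * trig (-t * g x) + exp (-t * f x) * (dtrig (-t * g x) * (-t * dg))).
Proof.
  intros Ht Hf Hg.
  assert (H1 : derivable_pt_lim (fun k => exp (-t * f k)) x (exp (-t * f x) * (-t * df))).
  { apply (derivable_pt_lim_comp (fun k => -t * f k) exp). 
    - apply (derivable_pt_lim_scal f (-t)). exact Hf.
    - apply derivable_pt_lim_exp. }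
  assert (H2 : derivable_pt_lim (fun k => trig (-t * g k)) x (dtrig (-t * g x) * (-t * dg))).
  { apply (derivable_pt_lim_comp (fun k => -t * g k) trig).
    - apply (derivable_pt_lim_scal g (-t)). exact Hg.
    - apply Ht. }
  exact (derivable_pt_lim_mult _ _ _ _ _ H1 H2).
Qed.
Lemma dl_root (A t1 t2 : R) (h f g : R -> R) x dh df dg (trig dtrig : R -> R) :
  (forall y, derivable_pt_lim trig y (dtrig y)) ->
  derivable_pt_lim h x dh -> derivable_pt_lim f x df -> derivable_pt_lim g x dg ->
  derivable_pt_lim (fun k => h k + k * A * (exp (-t1 * f k) * trig (-t1 * g k) + exp (-t2 * f k) * trig (-t2 * g k))) x
   (dh + (A * (exp (-t1 * f x) * trig (-t1 * g x) + exp (-t2 * f x) * trig (-t2 * g x))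
        + x * A * ((exp (-t1 * f x) * (-t1 * df) * trig (-t1 * g x) + exp (-t1 * f x) * (dtrig (-t1 * g x) * (-t1 * dg)))
                 + (exp (-t2 * f x) * (-t2 * df) * trig (-t2 * g x) + exp (-t2 * f x) * (dtrig (-t2 * g x) * (-t2 * dg)))))).
Proof.
  intros Ht Hh Hf Hg.
  pose proof (dl_ec t1 f g x df dg trig dtrig Ht Hf Hg) as E1.
  pose proof (dl_ec t2 f g x df dg trig dtrig Ht Hf Hg) as E2.
  pose proof (derivable_pt_lim_plus _ _ _ _ _ E1 E2) as E.
  assert (HA : derivable_pt_lim (fun k => k * A) x A).
  { pose proof (derivable_pt_lim_mult _ _ x _ _ (derivable_pt_lim_id x) (derivable_pt_lim_const A x)) as H.
    unfold mult_fct, id, fct_cte in H. replace (1 * A + x * 0) with A in H by ring. exact H. }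
  pose proof (derivable_pt_lim_mult _ _ _ _ _ HA E) as M.
  pose proof (derivable_pt_lim_plus _ _ _ _ _ Hh M) as R.
  unfold plus_fct, mult_fct in R. exact R.
Qed.

Lemma sgn_neg x : x < 0 -> sgn x = -1.
Proof. intros hx. unfold sgn. destruct (Rlt_dec 0 x); [lra|]. destruct (Rlt_dec x 0); [reflexivity|lra]. Qed.

Theorem mainTheorem7 (C a tau1 tau2 gamma : R)
  (hC : 0 < C) (ha : 0 < a) (ht1 : 0 < tau1) (ht2 : 0 < tau2)
  (hg : 0 < gamma <= 1)
  (alpha omega : R -> R) (dalpha domega delta : R) (hdelta : 0 < delta)
  (hroot : forall kappa, Rabs (kappa - kappa_c a tau1 tau2) < delta ->
             char_fun a tau1 tau2 kappa (mkC (alpha kappa) (omega kappa)) = Cr 0)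
  (halpha0 : alpha (kappa_c a tau1 tau2) = 0)
  (homega0 : omega (kappa_c a tau1 tau2) = omega0 tau1 tau2)
  (hda : derivable_pt_lim alpha (kappa_c a tau1 tau2) dalpha)
  (hdw : derivable_pt_lim omega (kappa_c a tau1 tau2) domega) :
  let c1 := lyap_c1 C a tau1 tau2 gamma in
  let th := theta_of tau1 tau2 in
  sgn (Re c1) = sgn (2 * PI * ftilde th / ((gamma * C) ^ 2 * (tau1 + tau2)))
  /\ sgn (2 * PI * ftilde th / ((gamma * C) ^ 2 * (tau1 + tau2))) = sgn (ftilde th)
  /\ ftilde th < 0
  /\ 0 < dalpha
  /\ 0 < - Re c1 / dalpha
  /\ 2 * Re c1 < 0.
Proof.
  intros c1 th.
  pose proof PI_RGT_0 as hP.
  assert (hT : 0 < tau1 + tau2) by lra.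
  assert (hth0 : 0 < th) by (unfold th, theta_of; apply Rdiv_lt_0_compat; [apply Rmult_lt_0_compat; [apply PI_RGT_0|lra]|lra]).
  assert (hthpi : th < PI).
  { unfold th, theta_of. apply Rmult_lt_reg_r with (tau1+tau2); [lra|].
    unfold Rdiv; rewrite Rmult_assoc, Rinv_l by lra. nra. }
  assert (hs : 0 < sin th) by (apply sin_gt_0; lra).
  assert (hf : ftilde th < 0) by (apply ftilde_neg; lra).
  assert (hG : 0 < gamma * C) by (destruct hg; nra).
  assert (hX : 2 * PI * ftilde th / ((gamma * C) ^ 2 * (tau1 + tau2)) < 0).
  { unfold Rdiv. assert (0 < / ((gamma * C) ^ 2 * (tau1 + tau2))) by (apply Rinv_0_lt_compat; apply Rmult_lt_0_compat; [apply pow_lt|]; lra).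
    assert (2 * PI * ftilde th < 0) by nra. nra. }
  assert (hRe : Re c1 < 0).
  { unfold c1. rewrite Re_c1_formula by (try lra; destruct hg; lra). fold th.
    set (d := 1 + (PI - 2 * th) * cos th / (2 * sin th)).
    assert (0 < (gamma * C) ^ 2 * (tau1 + tau2) * (sin th ^ 2 * (cos (2 * th) ^ 2 + 4 * sin th ^ 2) * (d ^ 2 + PI ^ 2 / 4))).
    { apply Rmult_lt_0_compat; [apply Rmult_lt_0_compat; [apply pow_lt|]; lra|].
      apply Rmult_lt_0_compat; [apply Rmult_lt_0_compat|]; nra. }
    unfold Rdiv. assert (0 < / ((gamma * C) ^ 2 * (tau1 + tau2) * (sin th ^ 2 * (cos (2 * th) ^ 2 + 4 * sin th ^ 2) * (d ^ 2 + PI ^ 2 / 4)))) by (apply Rinv_0_lt_compat; lra).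
    assert (2 * PI * ftilde th < 0) by nra. nra. }
  assert (hda_pos : 0 < dalpha).
  { set (s := sin th) in *. set (c := cos th).
    assert (hw1 : omega0 tau1 tau2 * tau1 = th) by (unfold omega0, th, theta_of; field; lra).
    assert (hkc : kappa_c a tau1 tau2 = PI / (2*a*s)).
    { unfold kappa_c. replace (PI * (tau1 - tau2) / (2 * (tau1 + tau2))) with (-(PI/2 - th)).
      rewrite cos_neg, cos_shift. reflexivity. unfold th, theta_of. field. lra. }
    set (w := omega0 tau1 tau2) in *.
    assert (cA1 : cos (- tau1 * w) = c) by (replace (- tau1 * w) with (-th) by (unfold w, th, theta_of, omega0; field; lra); rewrite cos_neg; reflexivity).
    assert (sA1 : sin (- tau1 * w) = - s) by (replace (- tau1 * w) with (-th) by (unfold w, th, theta_of, omega0; field; lra); rewrite sin_neg; reflexivity).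
    assert (cA2 : cos (- tau2 * w) = - c) by (replace (- tau2 * w) with (-(PI-th)) by (unfold w, th, theta_of, omega0; field; lra); rewrite cos_neg, Rtrigo_facts.cos_pi_minus; reflexivity).
    assert (sA2 : sin (- tau2 * w) = - s) by (replace (- tau2 * w) with (-(PI-th)) by (unfold w, th, theta_of, omega0; field; lra); rewrite sin_neg, sin_PI_x; reflexivity).
    set (kc := kappa_c a tau1 tau2) in *.
    assert (Zr : forall k, Rabs (k - kc) < delta ->
      (fun k => alpha k + k * (a / Tsum tau1 tau2) * (exp (-tau1 * alpha k) * cos (-tau1 * omega k) + exp (-tau2 * alpha k) * cos (-tau2 * omega k))) k = 0).
    { intros k hk. pose proof (f_equal Re (hroot k hk)) as E.
      unfold char_fun, Cadd, Cscale, Cexp, Cr in E; simpl in E. rewrite <- E. unfold Rdiv; ring. }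
    assert (Zi : forall k, Rabs (k - kc) < delta ->
      (fun k => omega k + k * (a / Tsum tau1 tau2) * (exp (-tau1 * alpha k) * sin (-tau1 * omega k) + exp (-tau2 * alpha k) * sin (-tau2 * omega k))) k = 0).
    { intros k hk. pose proof (f_equal Im (hroot k hk)) as E.
      unfold char_fun, Cadd, Cscale, Cexp, Cr in E; simpl in E. rewrite <- E. unfold Rdiv; ring. }
    pose proof (dl_zero _ _ _ _ hdelta Zr (dl_root (a / Tsum tau1 tau2) tau1 tau2 alpha alpha omega kc dalpha dalpha domega cos (fun y => - sin y) derivable_pt_lim_cos hda hda hdw)) as er.
    pose proof (dl_zero _ _ _ _ hdelta Zi (dl_root (a / Tsum tau1 tau2) tau1 tau2 omega alpha omega kc domega dalpha domega sin cos derivable_pt_lim_sin hdw hda hdw)) as ei.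
    cbv beta in er, ei.
    rewrite halpha0, homega0, !Rmult_0_r, !exp_0, cA1, sA1, cA2, sA2 in er, ei.
    rewrite hkc in er, ei. unfold Tsum in er, ei.
    set (A := 1 + PI / (2*a*s) * (a / (tau1 + tau2)) * (tau2 - tau1) * c).
    match type of er with ?L = 0 => set (Lr := L) in er end.
    match type of ei with ?L = 0 => set (Li := L) in ei end.
    assert (Key : dalpha * (A^2 + PI^2/4) - PI * a * s / (tau1 + tau2) = A * Lr + PI/2 * Li).
    { unfold Lr, Li, A. field. lra. }
    rewrite er, ei in Key.
    assert (0 < PI * a * s / (tau1 + tau2)) by (apply Rdiv_lt_0_compat; [apply Rmult_lt_0_compat; [nra|lra]|lra]).
    assert (0 < A^2 + PI^2/4) by nra.
    nra. }
  split; [rewrite (sgn_neg _ hRe), (sgn_neg _ hX); reflexivity|].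
  split; [rewrite (sgn_neg _ hX), (sgn_neg _ hf); reflexivity|].
  split; [exact hf|]. split; [exact hda_pos|].
  split; [apply Rdiv_lt_0_compat; lra | lra].
Qed.
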